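(* The set $R_{0,2}$ of all Riordan matrices whose $A$-sequence has the form $(1,a_1,0,a_3,a_4,\ldots)$ (i.e. $a_0=1$ and $a_2=0$) is a subgroup of the Riordan group.
   Context: Let $K$ be $\mathbb{R}$ or $\mathbb{C}$. A (proper) Riordan matrix is a pair $(g,f)$ of formal power series in $K[[t]]$ with $g(0)=1$, $f(0)=0$, $f'(0)\neq 0$, identified with the lower triangular matrix with entries $[t^n]g(t)f(t)^k$. The Riordan group is the set of these matrices under matrix multiplication, $(g_1,f_1)(g_2,f_2)=(g_1\,g_2(f_1),\,f_2(f_1))$, with identity $(1,t)$. The $A$-sequence $(a_j)_{j\ge0}$ of $(g,f)$ is the unique sequence whose generating function $A(t)$ satisfies $f(t)=tA(f(t))$. *)

(* Defs.v *)
From mathcomp Require Import all_boot all_order all_algebra.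
Set Implicit Arguments. Unset Strict Implicit. Unset Printing Implicit Defensive.
Import Order.TTheory GRing.Theory Num.Theory.
Local Open Scope ring_scope.

(* Formal power series over K, represented by their coefficient sequence:
   a n = [t^n] a(t). *)
Definition fps (K : numFieldType) := nat -> K.

Section FPS.
Variable K : numFieldType.

Definition fmul (a b : fps K) : fps K :=
  fun n => \sum_(i < n.+1) a i * b (n - i)%N.

Definition fone : fps K := fun n => if n == 0%N then 1 else 0.

Definition fX : fps K := fun n => if n == 1%N then 1 else 0.

Fixpoint fpow (a : fps K) (k : nat) : fps K :=
  match k with 0%N => fone | k'.+1 => fmul a (fpow a k') end.

(* composition a(b(t)); meaningful (and used only) when b 0 = 0, in which
   case [t^n] b^k = 0 for k > n so the sum is the full composition. *)
Definition fcomp (a b : fps K) : fps K :=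
  fun n => \sum_(k < n.+1) a k * fpow b k n.

(* A (proper) Riordan matrix: a pair (g, f) *)
Definition riordan := (fps K * fps K)%type.

Definition is_riordan (M : riordan) : Prop :=
  M.1 0%N = 1 /\ M.2 0%N = 0 /\ M.2 1%N != 0.

Definition rmul (M N : riordan) : riordan :=
  (fmul M.1 (fcomp N.1 M.2), fcomp N.2 M.2).

Definition rid : riordan := (fone, fX).

Definition is_Aseq (A f : fps K) : Prop := f = fmul fX (fcomp A f).

Definition R02 (M : riordan) : Prop :=
  is_riordan M /\ exists A : fps K, is_Aseq A M.2 /\ A 0%N = 1 /\ A 2%N = 0.

End FPS.

(* Main.v *)
Require Import Defs.
From mathcomp Require Import all_boot all_order all_algebra.
From mathcomp Require Import ring zify.
From Stdlib Require Import FunctionalExtensionality.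
Set Implicit Arguments. Unset Strict Implicit. Unset Printing Implicit Defensive.
Import Order.TTheory GRing.Theory Num.Theory.
Local Open Scope ring_scope.

Section Aux.
Variable K : numFieldType.
Implicit Types a b c f g h u : fps K.

Definition rep (N : nat) (a : fps K) (p : {poly K}) :=
  forall i, (i <= N)%N -> p`_i = a i.

Lemma rep_trunc N a : rep N a (\poly_(i < N.+1) a i).
Proof. by move=> i hi; rewrite coef_poly ltnS hi. Qed.

Lemma rep_mul N a b p q : rep N a p -> rep N b q -> rep N (fmul a b) (p * q).
Proof.
move=> ha hb i hi; rewrite coefM /fmul; apply: eq_bigr => j _.
have hj := ltn_ord j.
rewrite ha ?hb //; lia.
Qed.

Lemma rep_one N : rep N (fone K) 1.
Proof. by move=> i _; rewrite coef1 /fone; case: i. Qed.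

Lemma rep_X N : rep N (fX K) 'X.
Proof. by move=> i _; rewrite coefX /fX; case: (i == 1)%N. Qed.

Lemma rep_pow N a p k : rep N a p -> rep N (fpow a k) (p ^+ k).
Proof.
move=> ha; elim: k => [|k IH]; first by rewrite expr0; exact: rep_one.
by rewrite exprS; apply: rep_mul.
Qed.

Lemma fpow_small b k m : b 0%N = 0 -> (m < k)%N -> fpow b k m = 0.
Proof.
move=> b0; elim: k m => [//|k IH] m hm /=.
rewrite /fmul big1 // => i _.
have [->|ipos] := posnP i; first by rewrite b0 mul0r.
have hi := ltn_ord i.
rewrite IH ?mulr0 //; lia.
Qed.

Lemma sum_trunc (F : nat -> K) n m :
  (forall j, (n <= j)%N -> F j = 0) -> (n <= m)%N ->
  \sum_(j < m) F j = \sum_(j < n) F j.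
Proof.
move=> hF hnm; rewrite (big_ord_widen _ _ hnm) [in RHS]big_mkcond /=.
by apply: eq_bigr => j _; case: ifP => // /negbT; rewrite -leqNgt => /hF ->.
Qed.

Lemma rep_comp N a b p q : rep N a p -> rep N b q -> b 0%N = 0 ->
  rep N (fcomp a b) (p \Po q).
Proof.
move=> ha hb b0 i hi; rewrite coef_comp_poly /fcomp.
pose F j := p`_j * (q ^+ j)`_i.
have e1 : \sum_(j < size p) p`_j * (q ^+ j)`_i = \sum_(j < size p + i.+1) F j.
  symmetry; apply: sum_trunc; last exact: leq_addr.
  by move=> j hj; rewrite /F nth_default // mul0r.
rewrite e1 (sum_trunc (n := i.+1)); last exact: leq_addl.
  apply: eq_bigr => j _; have hj := ltn_ord j.
  rewrite /F ha; last by lia.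
  by rewrite (rep_pow j hb hi).
move=> j hj; rewrite /F (rep_pow j hb hi) fpow_small ?mulr0 //.
Qed.

Lemma fmulC a b : fmul a b = fmul b a.
Proof.
apply: functional_extensionality => n.
rewrite -(rep_mul (@rep_trunc n a) (@rep_trunc n b) (leqnn n)) mulrC.
by rewrite (rep_mul (@rep_trunc n b) (@rep_trunc n a) (leqnn n)).
Qed.

Lemma fmulr1 a : fmul a (fone K) = a.
Proof.
apply: functional_extensionality => n.
by rewrite -(rep_mul (@rep_trunc n a) (@rep_one n) (leqnn n)) mulr1 rep_trunc.
Qed.

Lemma fmulX_succ c n : fmul (fX K) c n.+1 = c n.
Proof.
by rewrite -(rep_mul (@rep_X n.+1) (@rep_trunc n.+1 c) (leqnn _)) coefXM /= rep_trunc.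
Qed.

Lemma fmulX0 c : fmul (fX K) c 0%N = 0.
Proof. by rewrite -(rep_mul (@rep_X 0) (@rep_trunc 0 c) (leqnn _)) coefXM. Qed.

Lemma fcomp0 b c : fcomp b c 0%N = b 0%N.
Proof. by rewrite /fcomp big_ord1 /= /fone /= mulr1. Qed.

Lemma fcompXr a : fcomp a (fX K) = a.
Proof.
apply: functional_extensionality => n.
by rewrite -(rep_comp (@rep_trunc n a) (@rep_X n) _ (leqnn _)) // comp_polyXr rep_trunc.
Qed.

Lemma fcompXl a : a 0%N = 0 -> fcomp (fX K) a = a.
Proof.
move=> a0; apply: functional_extensionality => n.
by rewrite -(rep_comp (@rep_X n) (@rep_trunc n a) a0 (leqnn _)) comp_polyX rep_trunc.
Qed.

Lemma fcomp1 c : c 0%N = 0 -> fcomp (fone K) c = fone K.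
Proof.
move=> c0; apply: functional_extensionality => n.
by rewrite -(rep_comp (@rep_one n) (@rep_trunc n c) c0 (leqnn _)) -polyC1 comp_polyC polyC1 (rep_one (leqnn n)).
Qed.

Lemma fcompM a b c : c 0%N = 0 -> fcomp (fmul a b) c = fmul (fcomp a c) (fcomp b c).
Proof.
move=> c0; apply: functional_extensionality => n.
have ha := @rep_trunc n a; have hb := @rep_trunc n b; have hc := @rep_trunc n c.
rewrite -(rep_comp (rep_mul ha hb) hc c0 (leqnn _)) comp_polyM.
by rewrite (rep_mul (rep_comp ha hc c0) (rep_comp hb hc c0)).
Qed.

Lemma fcompA a b c : b 0%N = 0 -> c 0%N = 0 ->
  fcomp (fcomp a b) c = fcomp a (fcomp b c).
Proof.
move=> b0 c0; apply: functional_extensionality => n.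
have ha := @rep_trunc n a; have hb := @rep_trunc n b; have hc := @rep_trunc n c.
have bc0 : fcomp b c 0%N = 0 by rewrite fcomp0.
rewrite -(rep_comp (rep_comp ha hb b0) hc c0 (leqnn _)) -comp_polyA.
by rewrite (rep_comp ha (rep_comp hb hc c0) bc0).
Qed.

Lemma fixpt (F : fps K -> fps K) :
  (forall a b n, (forall i, (i < n)%N -> a i = b i) -> F a n = F b n) ->
  exists a, F a = a.
Proof.
move=> HF; pose x k := iter k F (fun _ => 0).
have step : forall k i, (i < k)%N -> x k.+1 i = x k i.
  elim=> [//|k IH] i hi; rewrite /x !iterS; apply: HF => j hj.
  apply: IH; lia.
have stab : forall i m, (i < m)%N -> x m i = x i.+1 i.
  move=> i; elim=> [//|m IH] hm.
  have [e|lt] := eqVneq i m; first by rewrite e.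
  rewrite step; last lia.
  apply: IH; lia.
exists (fun i => x i.+1 i); apply: functional_extensionality => n.
rewrite (HF _ (x n)); last by move=> i hi; rewrite (stab i n hi).
by rewrite /x iterS.
Qed.


Lemma fmul0 a b : fmul a b 0%N = a 0%N * b 0%N.
Proof. by rewrite /fmul big_ord1. Qed.
Lemma fmul1 a b : fmul a b 1%N = a 0%N * b 1%N + a 1%N * b 0%N.
Proof. by rewrite /fmul !big_ord_recr big_ord0 /= add0r. Qed.
Lemma fmul2 a b : fmul a b 2%N = a 0%N * b 2%N + a 1%N * b 1%N + a 2%N * b 0%N.
Proof. by rewrite /fmul !big_ord_recr big_ord0 /= add0r. Qed.
Lemma fmul3 a b : fmul a b 3%N =
  a 0%N * b 3%N + a 1%N * b 2%N + a 2%N * b 1%N + a 3%N * b 0%N.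
Proof. by rewrite /fmul !big_ord_recr big_ord0 /= add0r. Qed.

Lemma fcomp_low b c : c 0%N = 0 ->
  [/\ fcomp b c 1%N = b 1%N * c 1%N,
      fcomp b c 2%N = b 1%N * c 2%N + b 2%N * c 1%N ^+ 2 &
      fcomp b c 3%N = b 1%N * c 3%N + 2%:R * b 2%N * c 1%N * c 2%N + b 3%N * c 1%N ^+ 3].
Proof.
move=> c0; rewrite /fcomp !big_ord_recr big_ord0 /= !fmulr1 /fone /=.
rewrite ?fmul1 ?fmul2 ?fmul3 ?fmul1 ?fmul2 ?fmul0 ?fmul1 c0.
by rewrite !big_ord0; split; ring.
Qed.

Lemma fpowS a k : fpow a k.+1 = fmul a (fpow a k).
Proof. by []. Qed.

Lemma fpow_ext a b k m : (forall i, (i <= m)%N -> a i = b i) -> fpow a k m = fpow b k m.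
Proof.
move=> h.
have ha := @rep_trunc m a.
have hb : rep m b (\poly_(i < m.+1) a i) by move=> i hi; rewrite ha // h.
by rewrite -(rep_pow k ha (leqnn m)) (rep_pow k hb (leqnn m)).
Qed.

Lemma pow_dep a b k n : a 0%N = 0 -> b 0%N = 0 -> (forall i, (i < n)%N -> a i = b i) ->
  fpow a k.+2 n = fpow b k.+2 n.
Proof.
move=> a0 b0 h; rewrite (fpowS a) (fpowS b) /fmul; apply: eq_bigr => i _.
have hi := ltn_ord i.
have [->|ipos] := posnP i; first by rewrite a0 b0 !mul0r.
have [ein|ilt] := eqVneq (nat_of_ord i) n.
  rewrite ein subnn.
  by rewrite (fpow_small (k := k.+1) (m := 0) a0) // (fpow_small (k := k.+1) (m := 0) b0) // !mulr0.
rewrite h; last lia.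
congr (_ * _); apply: fpow_ext => j hj; apply: h; lia.
Qed.

Lemma triang f a b n : a 0%N = 0 -> b 0%N = 0 -> (forall i, (i < n)%N -> a i = b i) ->
  fcomp f a n - f 1%N * a n = fcomp f b n - f 1%N * b n.
Proof.
move=> a0 b0 h; case: n h => [|m] h; first by rewrite !fcomp0 a0 b0.
rewrite /fcomp !big_ord_recl /= !fmulr1.
have -> : bump 0 0 = 1%N by [].
set Sa := \sum_(i < m) _; set Sb := \sum_(i < m) _.
have -> : Sa = Sb.
  apply: eq_bigr => i _; congr (_ * _).
  rewrite add0n; exact (@pow_dep a b i m.+1 a0 b0 h).
ring.
Qed.


Lemma rinv f : f 0%N = 0 -> f 1%N = 1 -> exists h, h 0%N = 0 /\ fcomp f h = fX K.
Proof.
move=> f0 f1.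
pose z (b : fps K) : fps K := fun i => if i == 0%N then 0 else b i.
pose F (b : fps K) : fps K := fun n => fX K n - (fcomp f (z b) n - f 1%N * z b n).
have [h hh] : exists h, F h = h.
  apply: fixpt => a b n hab; rewrite /F (@triang f (z a) (z b) n) // => i hi.
  by rewrite /z; case: (i == 0%N) => //; apply: hab.
have h0 : h 0%N = 0.
  by rewrite -hh /F fcomp0 f0 /z /= /fX /= mulr0 subr0 subrr.
have zh : z h = h by apply: functional_extensionality => -[|i] //.
exists h; split => //; apply: functional_extensionality => n.
have e := congr1 (fun v => v n) hh; rewrite /F zh f1 mul1r /= in e.
have : fX K n - fcomp f h n = 0.
  apply: (addIr (h n)); rewrite add0r -{2}e; ring.
by move/eqP; rewrite subr_eq0 => /eqP ->.
Qed.

Lemma minv u : u 0%N = 1 -> exists h, h 0%N = 1 /\ fmul h u = fone K.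
Proof.
move=> u0.
pose F (h : fps K) : fps K := fun n => fone K n - \sum_(i < n) h i * u (n - i)%N.
have [h hh] : exists h, F h = h.
  by apply: fixpt => a b n hab; rewrite /F; congr (_ - _); apply: eq_bigr => i _; rewrite hab.
exists h; split.
  by rewrite -hh /F big_ord0 subr0.
apply: functional_extensionality => n.
have e := congr1 (fun v => v n) hh; rewrite /F /= in e.
rewrite /fmul big_ord_recr /= subnn u0 mulr1 -e addrC subrK //.
Qed.

Definition R02' (M : riordan K) :=
  [/\ M.1 0%N = 1, M.2 0%N = 0, M.2 1%N = 1 & M.2 3%N = M.2 2%N ^+ 2].

Lemma fpow_diag f n : f 0%N = 0 -> f 1%N = 1 -> fpow f n n = 1.
Proof.
move=> f0 f1; elim: n => [//|n IH].
rewrite fpowS /fmul !big_ord_recl f0 mul0r add0r /= subSS subn0 IH f1 mulr1.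
rewrite big1 ?addr0 // => i _.
have hi := ltn_ord i.
rewrite fpow_small ?mulr0 //.
rewrite /bump /=; lia.
Qed.

Lemma R02_to M : R02 M -> R02' M.
Proof.
case: M => g f [[/= g0 [f0 _]] [A [hA [A0 A2]]]] /=.
have e n : f n.+1 = fcomp A f n by rewrite {1}hA fmulX_succ.
have [c1 c2 c3] := fcomp_low A f0.
have f1 : f 1%N = 1 by rewrite e fcomp0.
have f2 : f 2%N = A 1%N by rewrite e c1 f1 mulr1.
split => //.
rewrite /= (e 2%N) c2 A2 f1 f2; ring.
Qed.

Lemma R02_of M : R02' M -> R02 M.
Proof.
case: M => g f [/= g0 f0 f1 f3].
split; first by split => //=; rewrite f1 oner_neq0.
pose F (A : fps K) : fps K := fun n => f n.+1 - \sum_(k < n) A k * fpow f k n.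
have [A hA] : exists A, F A = A.
  by apply: fixpt => a b n hab; rewrite /F; congr (_ - _); apply: eq_bigr => i _; rewrite hab.
have eA n : A n = f n.+1 - \sum_(k < n) A k * fpow f k n by rewrite -{1}hA.
exists A; split => /=.
- apply: functional_extensionality => -[|n]; first by rewrite fmulX0 f0.
  rewrite fmulX_succ /fcomp big_ord_recr /= fpow_diag // mulr1 (eA n).
  by rewrite addrC subrK.
have a0 : A 0%N = 1 by rewrite eA big_ord0 subr0.
have a1 : A 1%N = f 2%N by rewrite eA big_ord1 a0 /= /fone /= mulr0 subr0.
split => //.
rewrite eA !big_ord_recr big_ord0 /= a0 a1 fmulr1 /fone /= f3; ring.
Qed.

Lemma R02'_mul M N : R02' M -> R02' N -> R02' (rmul M N).
Proof.
case: M => g1 f1 [/= g10 f10 f11 f13]; case: N => g2 f2 [/= g20 f20 f21 f23].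
have [c1 c2 c3] := fcomp_low f2 f10.
rewrite /rmul; split => /=.
- by rewrite fmul0 fcomp0 g10 g20 mulr1.
- by rewrite fcomp0.
- by rewrite c1 f21 f11 mulr1.
- by rewrite c3 c2 f21 f11 f13 f23; ring.
Qed.

Lemma R02'_inv M : R02' M -> exists N, R02' N /\ rmul M N = rid K /\ rmul N M = rid K.
Proof.
case: M => g f [/= g0 f0 f1 f3].
have [fb [fb0 hfb]] := rinv f0 f1.
have [c1 c2 c3] := fcomp_low f fb0.
have e1 := congr1 (fun v => v 1%N) hfb.
have e2 := congr1 (fun v => v 2%N) hfb.
have e3 := congr1 (fun v => v 3%N) hfb.
rewrite /= /fX /= in e1 e2 e3.
have fb1 : fb 1%N = 1 by rewrite -e1 c1 f1 mul1r.
rewrite c2 f1 fb1 in e2; rewrite c3 f1 fb1 in e3.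
have hb2 : fb 2%N = - f 2%N.
  by rewrite -(subr0 (fb 2%N)) -e2; ring.
have hb3 : fb 3%N = fb 2%N ^+ 2.
  by rewrite -(subr0 (fb 3%N)) -e3 hb2 f3; ring.
have [fbb [fbb0 hfbb]] := rinv fb0 fb1.
have ffbb : f = fbb by rewrite -(fcompXr f) -hfbb -fcompA // hfb fcompXl.
have hfbf : fcomp fb f = fX K by rewrite ffbb.
have u0 : fcomp g fb 0%N = 1 by rewrite fcomp0.
have [h [h0 hh]] := minv u0.
exists (h, fb); split; first by split.
rewrite /rmul /rid /= hfb hh hfbf; split => //.
have eg : g = fcomp (fcomp g fb) f by rewrite fcompA // hfbf fcompXr.
by rewrite fmulC {1}eg -fcompM // hh fcomp1.
Qed.

End Aux.

Theorem theorem4p1 (K : numFieldType) :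
  R02 (@rid K) /\
  (forall M N : riordan K, R02 M -> R02 N -> R02 (rmul M N)) /\
  (forall M : riordan K, R02 M ->
     exists N : riordan K, is_riordan N /\ rmul M N = rid K /\ rmul N M = rid K /\ R02 N).
Proof.
split; first by apply: R02_of; split => //=; rewrite /fX /= expr2 mulr0.
split.
  by move=> M N /R02_to hM /R02_to hN; apply: R02_of; apply: R02'_mul.
move=> M /R02_to hM; have [N [hN [e1 e2]]] := R02'_inv hM.
have hN' := R02_of hN; exists N; split => //; by case: hN'.
Qed.
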